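(* The sequence $a(n)=\sum_{k=0}^{\lfloor\frac{n-1}{2}\rfloor}(-1)^k e(n-1-k,k)$, $n\ge 0$ (with $a(0)=0$ as an empty sum), is periodic with period $12$, i.e. $a(n+12)=a(n)$ for all $n\ge0$, and its first twelve values $a(0),\dots,a(11)$ are $0,1,1,1,0,0,0,0,0,-1,-1,-1$.
   Context: $e(m,k)$ is the number of $k$-element subsets of $\{1,\dots,m\}$ whose sum of elements is even (the empty set counts as even). *)

(* Defs.v *)
From mathcomp Require Import all_boot all_order all_algebra.
Set Implicit Arguments. Unset Strict Implicit. Unset Printing Implicit Defensive.
Import GRing.Theory.

(* e m k = number of k-element subsets of {1,...,m} whose element sum is even.
   {1,...,m} is represented by 'I_m via i |-> i+1. *)
Definition e (m k : nat) : nat :=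
  #|[set A : {set 'I_m} | (#|A| == k) && ~~ odd (\sum_(i in A) i.+1)%N]|.

Definition a (n : nat) : int :=
  if n is 0 then 0%R
  else (\sum_(0 <= k < ((n - 1) %/ 2).+1) (-1) ^+ k * (e (n - 1 - k) k)%:Z)%R.

(* Main.v *)
Require Import Defs.
From mathcomp Require Import all_boot all_order all_algebra.
From mathcomp Require Import zify ring.
Import GRing.Theory.

Fixpoint E (m k : nat) (p : bool) : nat :=
  match m with
  | 0 => ((k == 0) && ~~ p : nat)
  | m'.+1 => match k with
             | 0 => E m' 0 p
             | k'.+1 => E m' k p + E m' k' (p (+) odd m)
             end
  end.

Definition cnt m k p := \sum_(A : {set 'I_m})
   ((#|A| == k) && (odd (\sum_(i in A) i.+1) == p) : nat).

Definition hh m (Bb : {set 'I_m} * bool) : {set 'I_m.+1} :=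
  [set i : 'I_m.+1 | if unlift ord_max i is Some j then j \in Bb.1 else Bb.2].
Definition gg m (A : {set 'I_m.+1}) : {set 'I_m} * bool :=
  ([set j | lift ord_max j \in A], ord_max \in A).

Arguments hh {m}. Arguments gg {m}.
Lemma hh_bij m : bijective (@hh m).
Proof.
exists (@gg m).
  case=> B b; rewrite /gg /hh; congr pair.
    by apply/setP => j; rewrite !inE liftK.
  by rewrite inE unlift_none.
move=> A; rewrite /gg /hh; apply/setP => i; rewrite inE.
by case: unliftP => [j ->|->]; rewrite ?inE.
Qed.

Lemma sum_hh m (G : 'I_m.+1 -> nat) B (b : bool) :
  \sum_(i in hh (B, b)) G i = \sum_(j in B) G (lift ord_max j) + b * G ord_max.
Proof.
rewrite big_mkcond (bigD1_ord ord_max) //= addnC; congr addn.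
  rewrite [RHS]big_mkcond; apply: eq_bigr => j _.
  by rewrite /hh inE liftK.
by rewrite /hh inE unlift_none; case: b => /=; rewrite ?mul1n ?mul0n.
Qed.

Lemma cntE m k p : cnt m k p = E m k p.
Proof.
elim: m k p => [|m IH] k p.
  rewrite /cnt (big_pred1 set0) => [|A]; last first.
    by rewrite /= /pred1 /=; apply/esym/eqP/setP => -[].
  by rewrite cards0 big_set0 /=; case: k; case: p.
rewrite /cnt (reindex _ (onW_bij _ (hh_bij m))) /=.
rewrite -(pair_big xpredT xpredT (fun B b => ((#|hh (B, b)| == k) &&
     (odd (\sum_(i in hh (B, b)) i.+1) == p) : nat))) /=.
have cardh B b : #|hh (B, b)| = #|B| + b.
  rewrite -!sum1_card sum_hh; by case: b; rewrite ?muln1 ?muln0.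
have Hs (B : {set 'I_m}) : \sum_(j in B) (bump m j).+1 = \sum_(j in B) j.+1.
  by apply: eq_bigr => j _; rewrite /bump leqNgt ltn_ord.
under eq_bigr => B _ do rewrite big_bool /= !sum_hh !cardh /= ?mul1n ?mul0n ?addn0 ?addn1 !Hs.
rewrite big_split /= -/(cnt m k p) IH.
case: k => [|k] /=.
  by rewrite big1 ?add0n.
rewrite addnC; congr addn.
rewrite -IH /cnt; apply: eq_bigr => B _; rewrite eqSS.
by rewrite oddD /=; case: (odd _); case: p; case: (odd m).
Qed.

Lemma eE m k : e m k = E m k false.
Proof.
rewrite -cntE /e /cnt cardsE -sum1_card big_mkcond /=.
apply: eq_bigr => A _; rewrite unfold_in; by case: (#|A| == k); case: (odd _).
Qed.

Local Open Scope ring_scope.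

Lemma E_small m k p : (m < k)%N -> E m k p = 0%N.
Proof.
elim: m k p => [|m IH] [|k] p //=.
rewrite ltnS => H; rewrite IH ?IH //; exact: ltnW.
Qed.

Lemma E0 m p : E m 0 p = ~~ p.
Proof. by elim: m => //= m ->. Qed.

Definition Cc m k : int := (E m k false)%:Z + (E m k true)%:Z.
Definition cc m k : int := (E m k false)%:Z - (E m k true)%:Z.
Definition diag (f : nat -> nat -> int) N :=
  \sum_(0 <= k < N.+1) (-1) ^+ k * f (N - k)%N k.

Lemma Cc0 m : Cc m 0 = 1.
Proof. by rewrite /Cc !E0. Qed.
Lemma cc0 m : cc m 0 = 1.
Proof. by rewrite /cc !E0. Qed.

Lemma Cc_rec m k : Cc m.+1 k.+1 = Cc m k.+1 + Cc m k.
Proof.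
rewrite /Cc /=; case: (odd m) => /=; rewrite !PoszD; ring.
Qed.

Lemma cc_rec m k : cc m.+2 k.+2 = cc m k.+2 - cc m k.
Proof.
rewrite /cc /=; case: (odd m) => /=; rewrite !PoszD; ring.
Qed.

Lemma cc1 m : cc m.+2 1 = cc m 1.
Proof.
rewrite /cc /=; case: (odd m) => /=; rewrite !PoszD !E0 /=; ring.
Qed.

Lemma Cc_small m k : (m < k)%N -> Cc m k = 0.
Proof. by move=> H; rewrite /Cc !E_small. Qed.
Lemma cc_small m k : (m < k)%N -> cc m k = 0.
Proof. by move=> H; rewrite /cc !E_small. Qed.

Lemma PC N k : Cc (N.+1 - k) k.+1 = Cc (N - k) k.+1 + Cc (N - k) k.
Proof.
case: (leqP k N) => H.
  by rewrite subSn // Cc_rec.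
rewrite !Cc_small ?addr0 //; lia.
Qed.

Lemma Pc N k : cc (N.+2 - k) k.+2 = cc (N - k) k.+2 - cc (N - k) k.
Proof.
case: (leqP k N) => H.
  have -> : (N.+2 - k = (N - k).+2)%N by lia.
  by rewrite cc_rec.
rewrite !cc_small ?subr0 //; lia.
Qed.

Lemma sum_ext (g : nat -> int) L M : (L <= M)%N ->
  (forall k, (L <= k)%N -> g k = 0) ->
  \sum_(0 <= k < M) g k = \sum_(0 <= k < L) g k.
Proof.
move=> LM H; rewrite (@big_cat_nat _ _ _ L 0 M _ _ (leq0n L) LM) /=.
rewrite [X in _ + X](_ : _ = 0) ?addr0 //.
rewrite big_nat_cond big1 // => k /andP[/andP[Lk _] _].
exact: H.
Qed.

Lemma S_rec N : diag Cc N.+2 = diag Cc N.+1 - diag Cc N.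
Proof.
rewrite /diag.
have h1 : \sum_(0 <= k < N.+3) (-1) ^+ k * Cc (N.+2 - k) k =
   1 - \sum_(0 <= k < N.+2) (-1) ^+ k * (Cc (N - k) k.+1 + Cc (N - k) k).
  rewrite big_nat_recl // subn0 Cc0 expr0 mul1r -sumrN; congr (_ + _).
  by apply: eq_bigr => k _; rewrite subSS PC exprS; ring.
have h2 : \sum_(0 <= k < N.+2) (-1) ^+ k * Cc (N.+1 - k) k =
   1 - \sum_(0 <= k < N.+1) (-1) ^+ k * Cc (N - k) k.+1.
  rewrite big_nat_recl // subn0 Cc0 expr0 mul1r -sumrN; congr (_ + _).
  by apply: eq_bigr => k _; rewrite subSS exprS; ring.
have h3 : \sum_(0 <= k < N.+2) (-1) ^+ k * Cc (N - k) k.+1 =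
          \sum_(0 <= k < N.+1) (-1) ^+ k * Cc (N - k) k.+1.
  apply: sum_ext => [|k Hk]; [lia|]; rewrite Cc_small ?mulr0 //; lia.
have h4 : \sum_(0 <= k < N.+2) (-1) ^+ k * Cc (N - k) k =
          \sum_(0 <= k < N.+1) (-1) ^+ k * Cc (N - k) k.
  apply: sum_ext => [|k Hk]; [lia|]; rewrite Cc_small ?mulr0 //; lia.
rewrite h1 h2.
under eq_bigr => k _ do rewrite mulrDr.
rewrite big_split /= h3 h4; ring.
Qed.

Lemma d_rec N : diag cc N.+4 = diag cc N.+2 - diag cc N.
Proof.
rewrite /diag.
have h1 : \sum_(0 <= k < N.+4.+1) (-1) ^+ k * cc (N.+4 - k) k =
   1 - cc N.+3 1 + \sum_(0 <= k < N.+3) (-1) ^+ k * (cc (N - k) k.+2 - cc (N - k) k).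
  rewrite big_nat_recl // big_nat_recl // subn0 cc0 expr0 mul1r expr1 addrA.
  congr (_ + _ + _); first by rewrite subSS subn0; ring.
  by apply: eq_bigr => k _; rewrite !subSS !exprS Pc; ring.
have h2 : \sum_(0 <= k < N.+3) (-1) ^+ k * cc (N.+2 - k) k =
   1 - cc N.+1 1 + \sum_(0 <= k < N.+1) (-1) ^+ k * cc (N - k) k.+2.
  rewrite big_nat_recl // big_nat_recl // subn0 cc0 expr0 mul1r expr1 addrA.
  congr (_ + _ + _); first by rewrite subSS subn0; ring.
  by apply: eq_bigr => k _; rewrite !subSS !exprS; ring.
have h3 : \sum_(0 <= k < N.+3) (-1) ^+ k * cc (N - k) k.+2 =
          \sum_(0 <= k < N.+1) (-1) ^+ k * cc (N - k) k.+2.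
  apply: sum_ext => [|k Hk]; [lia|]; rewrite cc_small ?mulr0 //; lia.
have h4 : \sum_(0 <= k < N.+3) (-1) ^+ k * cc (N - k) k =
          \sum_(0 <= k < N.+1) (-1) ^+ k * cc (N - k) k.
  apply: sum_ext => [|k Hk]; [lia|]; rewrite cc_small ?mulr0 //; lia.
rewrite h1 h2 cc1.
under eq_bigr => k _ do rewrite mulrBr.
rewrite big_split /= sumrN h3 h4; ring.
Qed.

Lemma S12 N : diag Cc (12 + N) = diag Cc N.
Proof.
have S3 M : diag Cc (3 + M) = - diag Cc M.
  change (diag Cc M.+3 = - diag Cc M); rewrite S_rec S_rec; ring.
change (12 + N)%N with (3 + (3 + (3 + (3 + N))))%N.
by rewrite !S3 !opprK.
Qed.

Lemma d12 N : diag cc (12 + N) = diag cc N.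
Proof.
have S6 M : diag cc (6 + M) = - diag cc M.
  change (diag cc M.+2.+4 = - diag cc M); rewrite d_rec d_rec; ring.
change (12 + N)%N with (6 + (6 + N))%N.
by rewrite !S6 opprK.
Qed.

Lemma aE N : a N.+1 = \sum_(0 <= k < (N %/ 2).+1) (-1) ^+ k * (E (N - k) k false)%:Z.
Proof.
rewrite /a subn1 /=; apply: eq_bigr => k _; by rewrite eE.
Qed.

Lemma a2 N : 2 * a N.+1 = diag Cc N + diag cc N.
Proof.
rewrite aE /diag -big_split /= mulr_sumr.
rewrite [RHS](@sum_ext _ (N %/ 2).+1).
- apply: eq_bigr => k _; rewrite /Cc /cc; ring.
- by rewrite ltnS leq_div.
- move=> k Hk; rewrite Cc_small ?cc_small ?mulr0 ?addr0 //; lia.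
Qed.
Local Close Scope ring_scope.

Theorem proposition4p4 :
  (forall n : nat, a (n + 12) = a n) /\
  [seq a n | n <- iota 0 12] =
    [:: 0; 1; 1; 1; 0; 0; 0; 0; 0; -1; -1; -1]%R.
Proof.
split.
  case=> [|N].
    by rewrite add0n aE unlock; vm_compute.
  have H : (2 * a (N.+1 + 12) = 2 * a N.+1)%R.
    rewrite addnC; change (12 + N.+1)%N with (12 + N)%N.+1.
    by rewrite !a2 S12 d12.
  lia.
change ([:: a 0; a 1; a 2; a 3; a 4; a 5; a 6; a 7; a 8; a 9; a 10; a 11] = [:: 0; 1; 1; 1; 0; 0; 0; 0; 0; -1; -1; -1]%R).
by rewrite !aE unlock; vm_compute.
Qed.
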